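(* The functions $D,d:\mathbb{C}^{n\times r}\times\mathbb{C}^{n\times r}\to\mathbb{R}$ defined by $D(x,y)=\min_{U\in U(r)}\|x-yU\|_2$ and $d(x,y)=\min_{U\in U(r)}\|x-yU\|_2\|x+yU\|_2$ descend to metrics on $\mathbb{C}^{n\times r}/U(r)$.
   Context: $\|\cdot\|_2$ is the Frobenius norm, $U(r)$ the unitary group. $\mathbb{C}^{n\times r}/U(r)$ is the set of classes under $x\sim y$ iff $x=yU$ for some $U\in U(r)$. Equivalently $D(x,y)=\sqrt{\|x\|_2^2+\|y\|_2^2-2\|x^*y\|_1}$ and $d(x,y)=\sqrt{(\|x\|_2^2+\|y\|_2^2)^2-4\|x^*y\|_1^2}$, $\|\cdot\|_1$ the nuclear norm. *)

(* Defs.v *)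
From HB Require Import structures.
From mathcomp Require Import all_boot all_order all_algebra.
From mathcomp Require Import complex.
From mathcomp Require Import classical_sets reals.
Set Implicit Arguments.
Unset Strict Implicit.
Unset Printing Implicit Defensive.
Import Order.TTheory GRing.Theory Num.Theory.
Local Open Scope ring_scope.
Local Open Scope classical_set_scope.

Definition adjmx (R : realType) m n (A : 'M[R[i]]_(m, n)) : 'M[R[i]]_(n, m) :=
  (map_mx (@conjc R) A)^T.

Definition unitary (R : realType) r (U : 'M[R[i]]_r) : Prop :=
  adjmx U *m U = 1%:M /\ U *m adjmx U = 1%:M.

Definition frob (R : realType) m n (A : 'M[R[i]]_(m, n)) : R :=
  Num.sqrt (\sum_(i < m) \sum_(j < n) (@complex.Re R (A i j) ^+ 2 + @complex.Im R (A i j) ^+ 2)).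

Definition uequiv (R : realType) n r (x y : 'M[R[i]]_(n, r)) : Prop :=
  exists U : 'M[R[i]]_r, unitary U /\ x = y *m U.

(* D(x,y) = min_{U in U(r)} ||x - yU||_2  (defined as the infimum;
   attainment is part of the theorem). *)
Definition Dist (R : realType) n r (x y : 'M[R[i]]_(n, r)) : R :=
  inf [set frob (x - y *m U) | U in [set U : 'M[R[i]]_r | unitary U]].

Definition dist (R : realType) n r (x y : 'M[R[i]]_(n, r)) : R :=
  inf [set frob (x - y *m U) * frob (x + y *m U)
      | U in [set U : 'M[R[i]]_r | unitary U]].

Definition descends_to_metric (R : realType) (X : Type) (eqv : X -> X -> Prop)
  (f : X -> X -> R) : Prop :=
  [/\ (forall x x' y y', eqv x x' -> eqv y y' -> f x y = f x' y'),
      (forall x y, 0 <= f x y),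
      (forall x y, f x y = 0 <-> eqv x y),
      (forall x y, f x y = f y x) &
      (forall x y z, f x z <= f x y + f y z)].

(* Main.v *)
Require Import Defs.
From HB Require Import structures.
From mathcomp Require Import all_boot all_order all_algebra.
From mathcomp Require Import complex.
From mathcomp Require Import classical_sets reals.
From mathcomp Require Import boolp topology normedtype derive.
From mathcomp Require Import ring lra.
Import Order.TTheory GRing.Theory Num.Theory.
Import numFieldTopology.Exports numFieldNormedType.Exports.
Local Open Scope ring_scope.

Module Helpers.
Set Implicit Arguments.
Unset Strict Implicit.
Unset Printing Implicit Defensive.
Local Open Scope classical_set_scope.
Local Open Scope ring_scope.
Section A.
Variable R : realType.
Implicit Types z w : R[i].
Local Notation Re := (@complex.Re R).
Local Notation Im := (@complex.Im R).

Lemma cReD z w : Re (z + w) = Re z + Re w.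
Proof. by case: z; case: w. Qed.
Lemma cImD z w : Im (z + w) = Im z + Im w.
Proof. by case: z; case: w. Qed.
Lemma cReN z : Re (- z) = - Re z.
Proof. by case: z. Qed.
Lemma cImN z : Im (- z) = - Im z.
Proof. by case: z. Qed.
Lemma cReM z w : Re (z * w) = Re z * Re w - Im z * Im w.
Proof. by case: z; case: w. Qed.
Lemma cImM z w : Im (z * w) = Re z * Im w + Im z * Re w.
Proof. case: z => a b; case: w => c d /=. ring. Qed.
Lemma cRe0 : Re 0 = 0. Proof. by []. Qed.
Lemma cIm0 : Im 0 = 0. Proof. by []. Qed.
Lemma cReJ z : Re (conjc z) = Re z. Proof. by case: z. Qed.
Lemma cImJ z : Im (conjc z) = - Im z. Proof. by case: z. Qed.
Lemma cReRC (t : R) z : Re ((t%:C)%C * z) = t * Re z.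
Proof. case: z => a b /=. ring. Qed.
Lemma cImRC (t : R) z : Im ((t%:C)%C * z) = t * Im z.
Proof. case: z => a b /=. ring. Qed.

Lemma cRe_sum (I : Type) (s : seq I) (P : pred I) (F : I -> R[i]) :
  Re (\sum_(i <- s | P i) F i) = \sum_(i <- s | P i) Re (F i).
Proof. by elim/big_rec2: _ => // i x y _ <-; rewrite cReD. Qed.
Lemma cIm_sum (I : Type) (s : seq I) (P : pred I) (F : I -> R[i]) :
  Im (\sum_(i <- s | P i) F i) = \sum_(i <- s | P i) Im (F i).
Proof. by elim/big_rec2: _ => // i x y _ <-; rewrite cImD. Qed.

Lemma complex_eq0 z : Re z = 0 -> Im z = 0 -> z = 0.
Proof. by case: z => a b /= -> ->. Qed.

Section IP.
Variables m k : nat.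
Implicit Types a b c : 'M[R[i]]_(m, k).

Definition ip a b : R :=
  \sum_(i < m) \sum_(j < k) (Re (a i j) * Re (b i j) + Im (a i j) * Im (b i j)).

Definition rsc (t : R) a : 'M[R[i]]_(m, k) := (t%:C)%C *: a.

Lemma frobE a : frob a = Num.sqrt (ip a a).
Proof. by rewrite /frob /ip; congr Num.sqrt; apply: eq_bigr => i _; apply: eq_bigr => j _; rewrite !expr2. Qed.

Lemma ipC a b : ip a b = ip b a.
Proof. by apply: eq_bigr => i _; apply: eq_bigr => j _; rewrite mulrC [Im _ * _]mulrC. Qed.

Lemma ipDl a b c : ip (a + b) c = ip a c + ip b c.
Proof.
rewrite /ip -big_split; apply: eq_bigr => i _; rewrite -big_split; apply: eq_bigr => j _.
rewrite !mxE cReD cImD /=; ring.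
Qed.
Lemma ipNl a b : ip (- a) b = - ip a b.
Proof.
rewrite /ip -sumrN; apply: eq_bigr => i _; rewrite -sumrN; apply: eq_bigr => j _.
rewrite !mxE cReN cImN; ring.
Qed.
Lemma ipZl t a b : ip (rsc t a) b = t * ip a b.
Proof.
rewrite /ip mulr_sumr; apply: eq_bigr => i _; rewrite mulr_sumr; apply: eq_bigr => j _.
rewrite !mxE cReRC cImRC; ring.
Qed.
Lemma ipDr a b c : ip a (b + c) = ip a b + ip a c.
Proof. by rewrite ipC ipDl ipC [ip c a]ipC. Qed.
Lemma ipNr a b : ip a (- b) = - ip a b.
Proof. by rewrite ipC ipNl ipC. Qed.
Lemma ipZr t a b : ip a (rsc t b) = t * ip a b.
Proof. by rewrite ipC ipZl ipC. Qed.
Lemma ipBl a b c : ip (a - b) c = ip a c - ip b c.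
Proof. by rewrite ipDl ipNl. Qed.
Lemma ipBr a b c : ip a (b - c) = ip a b - ip a c.
Proof. by rewrite ipDr ipNr. Qed.

Lemma ip_ge0 a : 0 <= ip a a.
Proof. by apply: sumr_ge0 => i _; apply: sumr_ge0 => j _; rewrite addr_ge0 // -expr2 sqr_ge0. Qed.


Lemma ip_eq0 a : ip a a = 0 -> a = 0.
Proof.
rewrite /ip => /eqP; rewrite psumr_eq0 => [/allP H|i _]; last first.
  by apply: sumr_ge0 => j _; rewrite addr_ge0 // -expr2 sqr_ge0.
apply/matrixP => i j; rewrite mxE.
have := H i (mem_index_enum _).
rewrite psumr_eq0 => [/allP /(_ j (mem_index_enum _)) /eqP Hij|j' _].
  by apply: complex_eq0; nra.
by rewrite addr_ge0 // -expr2 sqr_ge0.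
Qed.

Lemma quad_disc (A B C : R) : 0 <= B -> (forall t, 0 <= A - 2 * t * C + t ^+ 2 * B) ->
  C ^+ 2 <= A * B.
Proof.
move=> B0' H; have HA : 0 <= A by have := H 0; rewrite !(mul0r, mulr0, expr0n) /=; lra.
have [B0|Bn0] := eqVneq B 0.
  have [C0|Cn0] := eqVneq C 0; first by rewrite C0 B0 expr0n /= mulr0.
  have := H ((A + 1) / (2 * C)); rewrite B0 mulr0 addr0.
  have -> : 2 * ((A + 1) / (2 * C)) * C = A + 1 by field; rewrite Cn0.
  lra.
have HB : 0 < B.
  by rewrite lt_def Bn0.
have := H (C / B).
have -> : A - 2 * (C / B) * C + (C / B) ^+ 2 * B = A - C ^+ 2 / B.
  by field; rewrite Bn0.
rewrite subr_ge0 ler_pdivrMr //.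
Qed.

Lemma frob_ge0 a : 0 <= frob a.
Proof. by rewrite frobE sqrtr_ge0. Qed.
Lemma frob_sq a : frob a ^+ 2 = ip a a.
Proof. by rewrite frobE sqr_sqrtr // ip_ge0. Qed.

Lemma le_sqrt_sq (x y : R) : 0 <= y -> x <= y ^+ 2 -> Num.sqrt x <= y.
Proof.
move=> y0 xy; rewrite -(ger0_norm y0) -sqrtr_sqr; exact: ler_wsqrtr.
Qed.

Lemma cauchy_schwarz a b : ip a b <= frob a * frob b.
Proof.
have H : (ip a b) ^+ 2 <= ip a a * ip b b.
  apply: quad_disc; first exact: ip_ge0. move=> t; have := ip_ge0 (a - rsc t b).
  rewrite !(ipBl, ipBr, ipZl, ipZr) [ip b a]ipC.
  have -> : ip a a - t * ip a b - (t * ip a b - t * (t * ip b b)) =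
     ip a a - 2 * t * ip a b + t ^+ 2 * ip b b by ring.
  done.
rewrite frobE frobE -sqrtrM ?ip_ge0 //.
apply: le_trans (real_ler_norm _) _; first by rewrite num_real.
rewrite -sqrtr_sqr; exact: ler_wsqrtr.
Qed.

Lemma frobN a : frob (- a) = frob a.
Proof. by rewrite !frobE ipNl ipNr opprK. Qed.

Lemma abs_ip_le a b : `|ip a b| <= frob a * frob b.
Proof.
have [h|h] := lerP 0 (ip a b).
  by rewrite ger0_norm //; exact: cauchy_schwarz.
rewrite ltr0_norm // -ipNl -(frobN a); exact: cauchy_schwarz.
Qed.

Lemma frobD a b : frob (a + b) <= frob a + frob b.
Proof.
rewrite [frob (a + b)]frobE; apply: le_sqrt_sq; first by rewrite addr_ge0 ?frob_ge0.
rewrite !(ipDl, ipDr) [ip b a]ipC.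
have := cauchy_schwarz a b; have := frob_sq a; have := frob_sq b.
move=> Hb Ha Hc; rewrite sqrrD Ha Hb; lra.
Qed.

Lemma frob_eq0 a : frob a = 0 -> a = 0.
Proof. by move=> H; apply: ip_eq0; rewrite -frob_sq H expr0n. Qed.

Lemma frob0 : frob (0 : 'M[R[i]]_(m, k)) = 0.
Proof.
rewrite frobE /ip big1 ?sqrtr0 // => i _; rewrite big1 // => j _.
by rewrite mxE /= mulr0 addr0.
Qed.

End IP.
End A.

Section B.
Variable R : realType.
Local Notation Re := (@complex.Re R).
Local Notation Im := (@complex.Im R).

Lemma ip_tr m k (a b : 'M[R[i]]_(m, k)) : ip a b = Re (\tr (adjmx a *m b)).
Proof.
rewrite /mxtrace cRe_sum /ip exchange_big; apply: eq_bigr => j _.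
rewrite !mxE cRe_sum; apply: eq_bigr => i _; rewrite !mxE. rewrite cReM cReJ cImJ; ring.
Qed.

Lemma adjmx_mul m k p (a : 'M[R[i]]_(m, k)) (b : 'M[R[i]]_(k, p)) :
  adjmx (a *m b) = adjmx b *m adjmx a.
Proof. by rewrite /adjmx map_mxM trmx_mul. Qed.

Lemma adjmxK m k (a : 'M[R[i]]_(m, k)) : adjmx (adjmx a) = a.
Proof.
by apply/matrixP => i j; rewrite !mxE conjcK.
Qed.

Lemma adjmxN m k (a : 'M[R[i]]_(m, k)) : adjmx (- a) = - adjmx a.
Proof. by apply/matrixP => i j; rewrite !mxE rmorphN. Qed.

Lemma adjmx1 r : adjmx (1%:M : 'M[R[i]]_r) = 1%:M.
Proof. by rewrite /adjmx map_mx1 trmx1. Qed.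

Lemma unitary1 r : unitary (1%:M : 'M[R[i]]_r).
Proof. by rewrite /unitary adjmx1 mulmx1. Qed.

Lemma unitary_mul r (U V : 'M[R[i]]_r) : unitary U -> unitary V -> unitary (U *m V).
Proof.
move=> [U1 U2] [V1 V2]; split; rewrite adjmx_mul.
  by rewrite mulmxA -(mulmxA _ _ U) U1 mulmx1 V1.
by rewrite mulmxA -(mulmxA U) V2 mulmx1 U2.
Qed.

Lemma unitary_adj r (U : 'M[R[i]]_r) : unitary U -> unitary (adjmx U).
Proof. by move=> [U1 U2]; split; rewrite adjmxK. Qed.

Lemma unitaryN r (U : 'M[R[i]]_r) : unitary U -> unitary (- U).
Proof. by move=> [U1 U2]; split; rewrite adjmxN ?mulNmx ?mulmxN opprK. Qed.

Lemma ip_mulU m r (a b : 'M[R[i]]_(m, r)) U : unitary U -> ip (a *m U) (b *m U) = ip a b.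
Proof.
move=> [U1 U2]; rewrite !ip_tr adjmx_mul mxtrace_mulC -!mulmxA (mulmxA U) U2 mul1mx mxtrace_mulC.
by [].
Qed.

Lemma frob_mulU m r (a : 'M[R[i]]_(m, r)) U : unitary U -> frob (a *m U) = frob a.
Proof. by move=> HU; rewrite !frobE ip_mulU. Qed.

End B.

Section C.
Variable R : realType.
Local Notation Re := (@complex.Re R).
Local Notation Im := (@complex.Im R).
Variable r : nat.
Local Notation N := (r * r + r * r)%N.
Local Notation V := ('rV[R]_N).

Lemma contD (f g : V -> R) : continuous f -> continuous g -> continuous (fun v => f v + g v).
Proof. move=> cf cg v. have := (@continuousD R _ _ f g v (cf v) (cg v)). by []. Qed.
Lemma contB (f g : V -> R) : continuous f -> continuous g -> continuous (fun v => f v - g v).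
Proof. move=> cf cg v. have := (@continuousB R _ _ f g v (cf v) (cg v)). by []. Qed.
Lemma contM (f g : V -> R) : continuous f -> continuous g -> continuous (fun v => f v * g v).
Proof. move=> cf cg v. have := (@continuousM R _ f g v (cf v) (cg v)). by []. Qed.
Lemma contN (f : V -> R) : continuous f -> continuous (fun v => - f v).
Proof. move=> cf v. have := (@continuousN R _ _ f v (cf v)). by []. Qed.

Definition good (g : V -> R[i]) := continuous (fun v => Re (g v)) /\ continuous (fun v => Im (g v)).

Lemma good_cst c : good (fun _ => c).
Proof. by split; apply: cst_continuous. Qed.

Lemma good_add g h : good g -> good h -> good (fun v => g v + h v).
Proof.
move=> [g1 g2] [h1 h2]; split.
  have -> : (fun v => Re (g v + h v)) = (fun v => Re (g v) + Re (h v)).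
    by apply: funext => v; rewrite cReD.
  exact: contD.
have -> : (fun v => Im (g v + h v)) = (fun v => Im (g v) + Im (h v)).
  by apply: funext => v; rewrite cImD.
exact: contD.
Qed.

Lemma good_mul g h : good g -> good h -> good (fun v => g v * h v).
Proof.
move=> [g1 g2] [h1 h2]; split.
  have -> : (fun v => Re (g v * h v)) = (fun v => Re (g v) * Re (h v) - Im (g v) * Im (h v)).
    by apply: funext => v; rewrite cReM.
  by apply: contB; apply: contM.
have -> : (fun v => Im (g v * h v)) = (fun v => Re (g v) * Im (h v) + Im (g v) * Re (h v)).
  by apply: funext => v; rewrite cImM.
by apply: contD; apply: contM.
Qed.

Lemma good_conj g : good g -> good (fun v => conjc (g v)).
Proof.
move=> [g1 g2]; split.
  have -> : (fun v => Re (conjc (g v))) = (fun v => Re (g v)).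
    by apply: funext => v; rewrite cReJ.
  done.
have -> : (fun v => Im (conjc (g v))) = (fun v => - Im (g v)).
  by apply: funext => v; rewrite cImJ.
exact: contN.
Qed.

Lemma good_sum (I : Type) (s : seq I) (g : I -> V -> R[i]) :
  (forall i, good (g i)) -> good (fun v => \sum_(i <- s) g i v).
Proof.
move=> H; elim: s => [|a s IH].
  have -> : (fun v : V => \sum_(i <- [::]) g i v) = (fun _ => 0).
    by apply: funext => v; rewrite big_nil.
  exact: good_cst.
have -> : (fun v : V => \sum_(i <- a :: s) g i v) = (fun v => g a v + \sum_(i <- s) g i v).
  by apply: funext => v; rewrite big_cons.
exact: good_add.
Qed.

Definition toU (v : V) : 'M[R[i]]_r :=
  \matrix_(i, j) Complex (v 0 (lshift (r * r) (mxvec_index i j)))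
                         (v 0 (rshift (r * r) (mxvec_index i j))).
Definition ofU (U : 'M[R[i]]_r) : V :=
  row_mx (mxvec (map_mx Re U)) (mxvec (map_mx Im U)).

Lemma toUK U : toU (ofU U) = U.
Proof.
apply/matrixP => i j; rewrite mxE /ofU row_mxEl row_mxEr !mxvecE !mxE.
by case: (U i j).
Qed.

Lemma good_entry i j : good (fun v => toU v i j).
Proof.
split.
  have -> : (fun v => Re (toU v i j)) = (fun v : V => v 0 (lshift (r * r) (mxvec_index i j))).
    by apply: funext => v; rewrite mxE.
  exact: coord_continuous.
have -> : (fun v => Im (toU v i j)) = (fun v : V => v 0 (rshift (r * r) (mxvec_index i j))).
  by apply: funext => v; rewrite mxE.
exact: coord_continuous.
Qed.


Lemma complex_eqP (z w : R[i]) : z = w <-> Re z = Re w /\ Im z = Im w.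
Proof. by split => [->|]; [|case: z; case: w => a b c d /= [-> ->]]. Qed.

Lemma unitaryE (U : 'M[R[i]]_r) : unitary U <-> adjmx U *m U = 1%:M.
Proof. by split => [[]//|H]; split => //; apply: mulmx1C. Qed.

Lemma unitary_entry (U : 'M[R[i]]_r) i j : unitary U -> Re (U i j) ^+ 2 + Im (U i j) ^+ 2 <= 1.
Proof.
move=> [U1 _]; have := congr1 (fun M : 'M[R[i]]_r => Re (M j j)) U1 => /=.
rewrite !mxE eqxx cRe_sum.
have -> : Re (1%:R) = 1 by [].
under eq_bigr => k _ do rewrite !mxE cReM cReJ cImJ.
rewrite (bigD1 i) //= => H; rewrite -H !expr2 ler_wpDr //.
  by apply: sumr_ge0 => k _; rewrite mulNr opprK -!expr2 addr_ge0 ?sqr_ge0.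
by rewrite mulNr opprK lexx.
Qed.

Definition Uset : set V := [set v | unitary (toU v)].

Lemma good_F i j : good (fun v => (adjmx (toU v) *m toU v) i j).
Proof.
have -> : (fun v => (adjmx (toU v) *m toU v) i j) =
   (fun v => \sum_(k <- index_enum 'I_r) conjc (toU v k i) * toU v k j).
  by apply: funext => v; rewrite !mxE; apply: eq_bigr => k _; rewrite !mxE.
apply: good_sum => k; apply: good_mul; last exact: good_entry.
apply: good_conj; exact: good_entry.
Qed.

Lemma closed_eqfun (f : V -> R) (c : R) : continuous f -> closed [set v | f v = c].
Proof.
move=> cf; apply: (@preimage_closed _ _ f [set x | x = c]); last exact: closed_eq.
by move=> v _; apply: cf.
Qed.

Lemma closed_Uset : closed Uset.
Proof.
have -> : Uset = \bigcap_(p in [set: 'I_r * 'I_r])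
   ([set v | Re ((adjmx (toU v) *m toU v) p.1 p.2) = Re ((1%:M : 'M[R[i]]_r) p.1 p.2)] `&`
    [set v | Im ((adjmx (toU v) *m toU v) p.1 p.2) = Im ((1%:M : 'M[R[i]]_r) p.1 p.2)]).
  apply/seteqP; split => v /=.
    by move=> /unitaryE H p _ /=; rewrite H; split.
  move=> H; apply/unitaryE; apply/matrixP => i j; apply/complex_eqP.
  by have [] := H (i, j) I.
apply: closed_bigI => p _; apply: closedI; apply: closed_eqfun; have [] := good_F p.1 p.2; done.
Qed.

Lemma bounded_Uset : bounded_set Uset.
Proof.
exists 1; split => // M M1 v Av.
apply: le_trans (ltW M1).
have -> : `|v| = mx_norm v by [].
have [->|/mx_norm_neq0 [[a b] ->]] := eqVneq (mx_norm v) 0; first by [].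
rewrite ord1 /=.
have Hab : v 0 b ^+ 2 <= 1.
  case: (split_ordP b) => k ->; case: (mxvec_indexP k) => i j.
    have := unitary_entry i j Av; rewrite !mxE /=; nra.
  have := unitary_entry i j Av; rewrite !mxE /=; nra.
rewrite -(expr_le1 (n:=2)) //; by rewrite real_normK ?num_real.
Qed.


Lemma ip_conj m k (a b : 'M[R[i]]_(m, k)) :
  ip a b = Re (\sum_(i < m) \sum_(j < k) conjc (a i j) * b i j).
Proof.
rewrite cRe_sum /ip; apply: eq_bigr => i _; rewrite cRe_sum; apply: eq_bigr => j _.
rewrite cReM cReJ cImJ; ring.
Qed.

Lemma ip_max n (x y : 'M[R[i]]_(n, r)) :
  exists U0, unitary U0 /\ forall U, unitary U -> ip x (y *m U) <= ip x (y *m U0).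
Proof.
pose obj (v : V) := ip x (y *m toU v).
have cobj : continuous obj.
  have -> : obj = (fun v => Re (\sum_(i < n) \sum_(j < r) conjc (x i j) *
                     \sum_(k < r) y i k * toU v k j)).
    apply: funext => v; rewrite /obj ip_conj; congr Re; apply: eq_bigr => i _.
    by apply: eq_bigr => j _; rewrite mxE.
  have [] : good (fun v => \sum_(i < n) \sum_(j < r) conjc (x i j) *
                     \sum_(k < r) y i k * toU v k j); last by [].
  apply: good_sum => i; apply: good_sum => j; apply: good_mul; first exact: good_cst.
  apply: good_sum => k; apply: good_mul; first exact: good_cst.
  exact: good_entry.
have ne : Uset !=set0.
  by exists (ofU 1%:M); rewrite /Uset /= toUK; exact: unitary1.
have [c cA cmax] := @EVT_max_rV R N obj Uset ne
  (bounded_closed_compact bounded_Uset closed_Uset)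
  (continuous_subspaceT cobj).
exists (toU c); split; first by move: cA; rewrite inE.
move=> U HU; have := cmax (ofU U); rewrite /obj toUK; apply.
by rewrite inE /Uset /= toUK.
Qed.

End C.

Section D.
Variable R : realType.
Variables m k : nat.
Local Notation M := ('M[R[i]]_(m, k)).
Implicit Types a b e w x y z : M.

Definition hh (c : R) e w : M := w - rsc (c * ip w e) e.

Lemma hh_Q c e a b : ip (a - b) (hh c e (a + b)) =
  (ip a a - c * ip a e ^+ 2) - (ip b b - c * ip b e ^+ 2).
Proof.
rewrite /hh !(ipBl, ipBr, ipDl, ipDr, ipZl, ipZr) [ip b a]ipC.
ring.
Qed.

Lemma hh_norm c e w : c * (c * ip e e - 2) = 0 -> frob (hh c e w) = frob w.
Proof.
move=> H; rewrite !frobE /hh !(ipBl, ipBr, ipDl, ipDr, ipZl, ipZr) [ip e w]ipC.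
have -> : ip w w - c * ip w e * ip w e -
   (c * ip w e * ip w e - c * ip w e * (c * ip w e * ip e e)) =
   ip w w + ip w e ^+ 2 * (c * (c * ip e e - 2)) by ring.
by rewrite H mulr0 addr0.
Qed.

Lemma hh_bound c e a b : c * (c * ip e e - 2) = 0 ->
  (ip a a - c * ip a e ^+ 2) - (ip b b - c * ip b e ^+ 2) <= frob (a - b) * frob (a + b).
Proof.
move=> H; rewrite -hh_Q -(hh_norm (a + b) H); exact: cauchy_schwarz.
Qed.

Lemma hh_key u v : exists c e, c * (c * ip e e - 2) = 0 /\ frob u * frob v = ip u (hh c e v).
Proof.
set p := frob u; set q := frob v.
set s := ip u v.
set e := rsc q u - rsc p v.
have Hp : 0 <= p by exact: frob_ge0.
have Hq : 0 <= q by exact: frob_ge0.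
have Hpp : ip u u = p ^+ 2 by rewrite frob_sq.
have Hqq : ip v v = q ^+ 2 by rewrite frob_sq.
have Hs : `|s| <= p * q by exact: abs_ip_le.
have Hue : ip u e = q * p ^+ 2 - p * s.
  by rewrite /e !(ipBr, ipZr) Hpp.
have Hve : ip v e = q * s - p * q ^+ 2.
  by rewrite /e !(ipBr, ipZr) Hqq [ip v u]ipC.
have Hee : ip e e = 2 * p * q * (p * q - s).
  rewrite /e !(ipBl, ipZl, ipBr, ipZr) Hpp Hqq [ip v u]ipC -/s; ring.
pose c := if ip e e == 0 then 0 else 2 / ip e e.
exists c, e; split.
  rewrite /c; case: eqP => [_|/eqP En0]; first by rewrite mul0r.
  by rewrite divfK // subrr mulr0.
rewrite /hh ipBr ipZr -/s Hue Hve /c; case: eqP => [E0|/eqP En0].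
  suff Hsp : s = p * q by rewrite Hsp; ring.
  move: E0; rewrite Hee => /eqP; rewrite !mulf_eq0 pnatr_eq0 /= subr_eq0.
  case/orP => [/orP [/eqP p0|/eqP q0]|/eqP ->] //.
    have s0 : s = 0 by apply/eqP; rewrite -normr_le0; move: Hs; rewrite p0; lra.
    by rewrite s0 p0; lra.
  have s0 : s = 0 by apply/eqP; rewrite -normr_le0; move: Hs; rewrite q0; lra.
  by rewrite s0 q0; lra.
move: En0; rewrite Hee !mulf_eq0 pnatr_eq0 /= subr_eq0 !negb_or => /andP [/andP [pn0 qn0] dn0].
field. by rewrite pn0 qn0 /= subr_eq0 dn0.
Qed.

Lemma ptolemy x y z :
  frob (x - z) * frob (x + z) <=
  frob (x - y) * frob (x + y) + frob (y - z) * frob (y + z).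
Proof.
have [c [e [Hc ->]]] := hh_key (x - z) (x + z).
rewrite hh_Q.
have -> : ip x x - c * ip x e ^+ 2 - (ip z z - c * ip z e ^+ 2) =
  ((ip x x - c * ip x e ^+ 2) - (ip y y - c * ip y e ^+ 2)) +
  ((ip y y - c * ip y e ^+ 2) - (ip z z - c * ip z e ^+ 2)) by ring.
by apply: lerD; apply: hh_bound.
Qed.

End D.

Section E.
Variable R : realType.
Variables n r : nat.
Local Notation M := ('M[R[i]]_(n, r)).
Local Notation U_ := ('M[R[i]]_r).
Implicit Types x y z : M.

Lemma inf_attained (S : set R) m : S m -> (forall s, S s -> m <= s) -> inf S = m.
Proof.
move=> Sm Hm; apply/le_anti/andP; split.
  by apply: ge_inf => //; exists m => s /Hm.
by apply: lb_le_inf => //; exists m.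
Qed.

Lemma frob_sub_sq x b : ip (x - b) (x - b) = ip x x - 2 * ip x b + ip b b.
Proof. rewrite ipBl !ipBr [ip b x]ipC; ring. Qed.
Lemma frob_add_sq x b : ip (x + b) (x + b) = ip x x + 2 * ip x b + ip b b.
Proof. rewrite ipDl !ipDr [ip b x]ipC; ring. Qed.

Lemma Dist_min x y : exists U0, unitary U0 /\ Dist x y = frob (x - y *m U0) /\
  forall U, unitary U -> frob (x - y *m U0) <= frob (x - y *m U).
Proof.
have [U0 [HU0 Hmax]] := ip_max x y.
have Hle : forall U, unitary U -> frob (x - y *m U0) <= frob (x - y *m U).
  move=> U HU; rewrite !frobE; apply: ler_wsqrtr.
  rewrite !frob_sub_sq !ip_mulU //; have := Hmax U HU; lra.
exists U0; split => //; split => //.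
apply: inf_attained; first by exists U0.
by move=> s [U HU <-]; apply: Hle.
Qed.

Lemma dist_min x y : exists U0, unitary U0 /\
  dist x y = frob (x - y *m U0) * frob (x + y *m U0) /\
  forall U, unitary U -> frob (x - y *m U0) * frob (x + y *m U0) <=
                         frob (x - y *m U) * frob (x + y *m U).
Proof.
have [U0 [HU0 Hmax]] := ip_max x y.
have Hle : forall U, unitary U -> frob (x - y *m U0) * frob (x + y *m U0) <=
                         frob (x - y *m U) * frob (x + y *m U).
  move=> U HU; rewrite !frobE -!sqrtrM ?ip_ge0 //; apply: ler_wsqrtr.
  rewrite !frob_sub_sq !frob_add_sq !ip_mulU //.
  have h1 := Hmax U HU; have := Hmax (- U) (unitaryN HU).
  rewrite mulmxN ipNr => h2.
  set a := ip x x + ip y y.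
  set t := ip x (y *m U); set t0 := ip x (y *m U0).
  have -> : (ip x x - 2 * t + ip y y) * (ip x x + 2 * t + ip y y) = a ^+ 2 - 4 * t ^+ 2.
    rewrite /a; ring.
  have -> : (ip x x - 2 * t0 + ip y y) * (ip x x + 2 * t0 + ip y y) = a ^+ 2 - 4 * t0 ^+ 2.
    rewrite /a; ring.
  have h3 : 0 <= (t0 - t) * (t0 + t) by apply: mulr_ge0; rewrite /t /t0; lra.
  have -> : a ^+ 2 - 4 * t0 ^+ 2 = (a ^+ 2 - 4 * t ^+ 2) - 4 * ((t0 - t) * (t0 + t)) by ring.
  lra.
exists U0; split => //; split => //.
apply: inf_attained; first by exists U0.
by move=> s [U HU <-]; apply: Hle.
Qed.

Lemma Dist_le x y U : unitary U -> Dist x y <= frob (x - y *m U).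
Proof. by move=> HU; have [U0 [_ [-> H]]] := Dist_min x y; apply: H. Qed.
Lemma dist_le x y U : unitary U -> dist x y <= frob (x - y *m U) * frob (x + y *m U).
Proof. by move=> HU; have [U0 [_ [-> H]]] := dist_min x y; apply: H. Qed.

Lemma mulmx_adjK (a : M) (U : U_) : unitary U -> a *m U *m adjmx U = a.
Proof. by move=> [_ H]; rewrite -mulmxA H mulmx1. Qed.
Lemma mulmx_Kadj (a : M) (U : U_) : unitary U -> a *m adjmx U *m U = a.
Proof. by move=> [H _]; rewrite -mulmxA H mulmx1. Qed.

Lemma uequiv_sym x y : uequiv x y -> uequiv y x.
Proof.
move=> [P [HP ->]]; exists (adjmx P); split; first exact: unitary_adj.
by rewrite mulmx_adjK.
Qed.

Lemma frob_transport (a b : M) (P W : U_) : unitary P ->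
  frob (a *m P - b *m W) = frob (a - b *m (W *m adjmx P)).
Proof.
move=> HP; rewrite -(frob_mulU (a - b *m (W *m adjmx P)) HP) mulmxBl.
by rewrite !mulmxA mulmx_Kadj.
Qed.
Lemma frob_transport' (a b : M) (P W : U_) : unitary P ->
  frob (a *m P + b *m W) = frob (a + b *m (W *m adjmx P)).
Proof.
move=> HP; rewrite -(frob_mulU (a + b *m (W *m adjmx P)) HP) mulmxDl.
by rewrite !mulmxA mulmx_Kadj.
Qed.

Lemma Dist_inv_le x x' y y' : uequiv x x' -> uequiv y y' -> Dist x' y' <= Dist x y.
Proof.
move=> [P [HP ->]] [Q [HQ ->]].
have [U0 [HU0 [-> _]]] := Dist_min (x' *m P) (y' *m Q).
rewrite -mulmxA frob_transport //.
apply: Dist_le; apply: unitary_mul; first exact: unitary_mul.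
exact: unitary_adj.
Qed.

Lemma dist_inv_le x x' y y' : uequiv x x' -> uequiv y y' -> dist x' y' <= dist x y.
Proof.
move=> [P [HP ->]] [Q [HQ ->]].
have [U0 [HU0 [-> _]]] := dist_min (x' *m P) (y' *m Q).
rewrite -mulmxA frob_transport // frob_transport' //.
apply: dist_le; apply: unitary_mul; first exact: unitary_mul.
exact: unitary_adj.
Qed.

Lemma Dist_ge0 x y : 0 <= Dist x y.
Proof. by have [U0 [_ [-> _]]] := Dist_min x y; exact: frob_ge0. Qed.
Lemma dist_ge0 x y : 0 <= dist x y.
Proof. by have [U0 [_ [-> _]]] := dist_min x y; rewrite mulr_ge0 ?frob_ge0. Qed.

Lemma Dist_eq0 x y : Dist x y = 0 <-> uequiv x y.
Proof.
split.
  have [U0 [HU0 [-> _]]] := Dist_min x y => /frob_eq0 /eqP; rewrite subr_eq0 => /eqP ->.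
  by exists U0.
move=> [U [HU ->]]; apply/le_anti/andP; split; last exact: Dist_ge0.
by apply: le_trans (Dist_le _ _ HU) _; rewrite subrr frob0.
Qed.

Lemma dist_eq0 x y : dist x y = 0 <-> uequiv x y.
Proof.
split.
  have [U0 [HU0 [-> _]]] := dist_min x y => /eqP; rewrite mulf_eq0.
  case/orP => /eqP /frob_eq0 /eqP.
    by rewrite subr_eq0 => /eqP ->; exists U0.
  rewrite addr_eq0 => /eqP ->; exists (- U0); split; first exact: unitaryN.
  by rewrite mulmxN.
move=> [U [HU ->]]; apply/le_anti/andP; split; last exact: dist_ge0.
by apply: le_trans (dist_le _ _ HU) _; rewrite subrr frob0 mul0r.
Qed.

Lemma Dist_sym_le x y : Dist y x <= Dist x y.
Proof.
have [U0 [HU0 [-> _]]] := Dist_min x y.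
apply: le_trans (Dist_le y x (unitary_adj HU0)) _.
have -> : y - x *m adjmx U0 = (y *m U0 - x) *m adjmx U0 by rewrite mulmxBl mulmx_adjK.
rewrite frob_mulU; last exact: unitary_adj.
by have := frobN (x - y *m U0); rewrite opprB => ->.
Qed.

Lemma dist_sym_le x y : dist y x <= dist x y.
Proof.
have [U0 [HU0 [-> _]]] := dist_min x y.
apply: le_trans (dist_le y x (unitary_adj HU0)) _.
have -> : y - x *m adjmx U0 = (y *m U0 - x) *m adjmx U0 by rewrite mulmxBl mulmx_adjK.
have -> : y + x *m adjmx U0 = (y *m U0 + x) *m adjmx U0 by rewrite mulmxDl mulmx_adjK.
rewrite !frob_mulU; try exact: unitary_adj.
by have := frobN (x - y *m U0); rewrite opprB [y *m U0 + x]addrC => ->.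
Qed.

Lemma Dist_tri x y z : Dist x z <= Dist x y + Dist y z.
Proof.
have [U1 [HU1 [-> _]]] := Dist_min x y.
have [U2 [HU2 [-> _]]] := Dist_min y z.
apply: le_trans (Dist_le x z (unitary_mul HU2 HU1)) _.
rewrite -(frob_mulU (y - z *m U2) HU1) mulmxBl -mulmxA.
have -> : x - z *m (U2 *m U1) = (x - y *m U1) + (y *m U1 - z *m (U2 *m U1)).
  by rewrite addrA subrK.
exact: frobD.
Qed.

Lemma dist_tri x y z : dist x z <= dist x y + dist y z.
Proof.
have [U1 [HU1 [-> _]]] := dist_min x y.
have [U2 [HU2 [-> _]]] := dist_min y z.
apply: le_trans (dist_le x z (unitary_mul HU2 HU1)) _.
rewrite -(frob_mulU (y - z *m U2) HU1) -(frob_mulU (y + z *m U2) HU1) mulmxBl mulmxDl -mulmxA.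
exact: ptolemy.
Qed.

End E.


End Helpers.
Import Helpers.

Theorem proposition2p3 (R : realType) (n r : nat) :
  (* the minima defining D and d are attained *)
  (forall x y : 'M[R[i]]_(n, r),
     exists U : 'M[R[i]]_r, unitary U /\ Dist x y = frob (x - y *m U)) /\
  (forall x y : 'M[R[i]]_(n, r),
     exists U : 'M[R[i]]_r, unitary U /\
       dist x y = frob (x - y *m U) * frob (x + y *m U)) /\
  (* and D, d descend to metrics on C^{n x r} / U(r) *)
  descends_to_metric (@uequiv R n r) (@Dist R n r) /\
  descends_to_metric (@uequiv R n r) (@dist R n r).
Proof.
split.
  by move=> x y; have [U [HU [H _]]] := Dist_min x y; exists U.
split.
  by move=> x y; have [U [HU [H _]]] := dist_min x y; exists U.
split; split.
- move=> x x' y y' Hx Hy; apply/le_anti/andP; split; last exact: Dist_inv_le.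
  by apply: Dist_inv_le; apply: uequiv_sym.
- exact: Dist_ge0.
- exact: Dist_eq0.
- by move=> x y; apply/le_anti/andP; split; apply: Dist_sym_le.
- exact: Dist_tri.
- move=> x x' y y' Hx Hy; apply/le_anti/andP; split; last exact: dist_inv_le.
  by apply: dist_inv_le; apply: uequiv_sym.
- exact: dist_ge0.
- exact: dist_eq0.
- by move=> x y; apply/le_anti/andP; split; apply: dist_sym_le.
- exact: dist_tri.
Qed.
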